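(* Let $p\ge 2$, $1\le r\le p-1$, $n\ge 2$, $h=1/n$, let $b_1,b_2$ be the first two B-splines of $\mathcal S(p,r,h)$, and let $\widetilde\alpha,\widetilde\beta\in\mathcal S(\widetilde p,\widetilde r,h)$ be splines (for some $\widetilde p\ge 1$, $0\le \widetilde r<\widetilde p$) with $\widetilde\alpha(v)\neq 0$ for all $v\in[0,1]$. For $b^+\in\mathcal S^+:=\mathcal S(p,p-1,h)$ and $b^-\in\mathcal S^-:=\mathcal S(p-1,p-2,h)$ define $$f[b^+,b^-](u,v)=b^+(v)\big(b_1(u)+b_2(u)\big)+\big(\widetilde\alpha(v)b^-(v)+\widetilde\beta(v)(b^+)'(v)\big)\tfrac hp\,b_2(u),\qquad (u,v)\in[0,1]^2,$$ and the approximate normal derivative at $u=0$, $$D_{\widetilde{\mathbf n}}f(v):=\widetilde a_1(v)\,\partial_u f(0,v)+\widetilde a_2(v)\,\partial_v f(0,v),\qquad \widetilde a_1=-\tfrac1{\widetilde\alpha},\ \widetilde a_2=\tfrac{\widetilde\beta}{\widetilde\alpha}.$$ Then for all $b^+\in\mathcal S^+$, $b^-\in\mathcal S^-$: (i) $f[b^+,b^-](0,v)=b^+(v)$ and $D_{\widetilde{\mathbf n}}f[b^+,b^-](v)=-b^-(v)$ for all $v\in[0,1]$. In particular $f[b_j^+,0]$ has trace $b_j^+$ and vanishing approximate normal derivative, and $f[0,b_j^-]$ has trace $0$ and approximate normal derivative $-b_j^-$. (ii) Let $\{b_j^+\}_{j=1}^{N_+}$ and $\{b_j^-\}_{j=1}^{N_-}$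 be the B-spline bases of $\mathcal S^+$ and $\mathcal S^-$. If $f=f[b_j^+,0]$ with $4\le j\le N_+-4$, or $f=f[0,b_j^-]$ with $3\le j\le N_--3$, then at each of the four corners $(0,0),(1,0),(1,1),(0,1)$ of $[0,1]^2$ the value, the gradient and the Hessian of $f$ (taken as limits from inside $[0,1]^2$) vanish. Consequently, for a regular patch parametrization $\mathbf F$ and $\varphi_h=f\circ\mathbf F^{-1}$, the value, gradient and Hessian of $\varphi_h$ vanish at all four patch vertices $\mathbf F(0,0),\mathbf F(1,0),\mathbf F(1,1),\mathbf F(0,1)$.
   Context: For positive integers $p$, $r<p$, $n$ and $h=1/n$, $\mathcal S(p,r,h)$ denotes the univariate spline space on $[0,1]$ of degree $p$ with the open uniform knot vector in which $0$ and $1$ have multiplicity $p+1$ and each interior knot $ih$, $i=1,\dots,n-1$, has multiplicity $p-r$; its B-spline basis is ordered along the knot vector. If $\varphi=f\circ\mathbf F^{-1}$ for a regular parametrization $\mathbf F$ of a patch whose edge $u=0$ carries the approximate normal vector $\widetilde{\mathbf n}\circ\mathbf F(0,v)=\widetilde a_1(v)\partial_u\mathbf F(0,v)+\widetilde a_2(v)\partial_v\mathbf F(0,v)$, then $(\widetilde{\mathbf n}\cdot\nabla_{\mathbf x}\varphi)\circ\mathbf F(0,v)=D_{\widetilde{\mathbf n}}f(v)$. (In the paper $\widetilde\alpha,\widetilde\beta$ are spline approximations of the gluing data $\alpha(v)=\det(\partial_u\mathbf F(0,v),\partial_v\mathbf F(0,v))$, $\beta(v)=\partial_u\mathbf F(0,v)\cdot\partial_v\mathbf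 F(0,v)/\|\partial_v\mathbf F(0,v)\|^2$; the claim holds for any such splines with $\widetilde\alpha$ nonvanishing.) *)

(* Defs.v *)
From Stdlib Require Import Reals.
From Coquelicot Require Import Coquelicot.
Open Scope R_scope.

(* a / b with the B-spline convention 0/0 := 0 (any ./0 := 0) *)
Definition frac (a b : R) : R := if Req_EM_T b 0 then 0 else a / b.

(* Open uniform knot vector of S(p,r,h), h = 1/n, 0-indexed:
   t_0 = ... = t_p = 0, each interior knot i*h (i=1..n-1) repeated p-r times,
   then 1 repeated p+1 times (we continue it by 1 forever; harmless). *)
Definition knot (p r n : nat) (k : nat) : R :=
  if Nat.leb k p then 0
  else if Nat.ltb k (p + 1 + (n - 1) * (p - r))%nat then
    INR ((k - (p + 1)) / (p - r) + 1)%nat / INR n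
  else 1.

(* index of the last nonempty knot span [t_L, t_{L+1}) = [(n-1)h, 1) *)
Definition last_span (p r n : nat) : nat := (p + (n - 1) * (p - r))%nat.

(* Degree 0: indicator of [t_i, t_{i+1}), except that
   the first nonempty span (index [first]) is extended to the left and the last
   nonempty span (index [last]) to the right (so it is closed at 1).  On [0,1]
   this gives exactly the usual B-splines (with value at 1 taken from the left);
   outside [0,1] every B-spline is the polynomial continuation of its first/last
   piece, so that derivatives at 0 and 1 are the one-sided ones from inside. *)
Fixpoint cdb (t : nat -> R) (first last : nat) (q i : nat) (x : R) : R :=
  match q with
  | O =>
      if Rlt_dec (t i) (t (S i)) then
        let lo := if Nat.eq_dec i first then true
                  else if Rle_dec (t i) x then true else false in
        let hi := if Nat.eq_dec i last then true
                  else if Rlt_dec x (t (S i)) then true else false in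
        if andb lo hi then 1 else 0
      else 0
  | S q' =>
      frac (x - t i) (t (i + S q')%nat - t i) * cdb t first last q' i x
      + frac (t (i + S q' + 1)%nat - x) (t (i + S q' + 1)%nat - t (S i))
          * cdb t first last q' (S i) x
  end.

Definition bspline (p r n i : nat) (x : R) : R :=
  cdb (knot p r n) p (last_span p r n) p i x.

Definition dimS (p r n : nat) : nat := (p + 1 + (n - 1) * (p - r))%nat.

(* 1-indexed B-spline b_j, j = 1..dimS, as in the paper *)
Definition Bsp (p r n j : nat) : R -> R := bspline p r n (pred j).

Fixpoint rsum (N : nat) (F : nat -> R) : R :=
  match N with O => 0 | S k => rsum k F + F k end.

Definition inS (p r n : nat) (g : R -> R) : Prop :=
  exists c : nat -> R, forall x, g x = rsum (dimS p r n) (fun i => c i * bspline p r n i x).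

Definition hmesh (n : nat) : R := / INR n.

Definition fpatch (p r n : nat) (alpha beta bp bm : R -> R) (u v : R) : R :=
  bp v * (Bsp p r n 1 u + Bsp p r n 2 u)
  + (alpha v * bm v + beta v * Derive bp v) * (hmesh n / INR p) * Bsp p r n 2 u.

Definition d1 (g : R -> R -> R) (u v : R) : R := Derive (fun s => g s v) u.
Definition d2 (g : R -> R -> R) (u v : R) : R := Derive (fun s => g u s) v.

Definition Dnormal (alpha beta : R -> R) (f : R -> R -> R) (v : R) : R :=
  (- (1 / alpha v)) * d1 f 0 v + (beta v / alpha v) * d2 f 0 v.

Definition lim_inside (S : R -> R -> Prop) (g : R -> R -> R) (c1 c2 l : R) : Prop :=
  forall eps, 0 < eps -> exists delta, 0 < delta /\
    forall u v, S u v -> Rabs (u - c1) < delta -> Rabs (v - c2) < delta ->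
      Rabs (g u v - l) < eps.

Definition vanish2_inside (S : R -> R -> Prop) (g : R -> R -> R) (c1 c2 : R) : Prop :=
  (exists delta, 0 < delta /\
    forall u v, S u v -> Rabs (u - c1) < delta -> Rabs (v - c2) < delta ->
      ex_derive (fun s => g s v) u /\ ex_derive (fun s => g u s) v /\
      ex_derive (fun s => d1 g s v) u /\ ex_derive (fun s => d1 g u s) v /\
      ex_derive (fun s => d2 g s v) u /\ ex_derive (fun s => d2 g u s) v)
  /\ lim_inside S g c1 c2 0
  /\ lim_inside S (d1 g) c1 c2 0 /\ lim_inside S (d2 g) c1 c2 0
  /\ lim_inside S (d1 (d1 g)) c1 c2 0 /\ lim_inside S (d2 (d1 g)) c1 c2 0
  /\ lim_inside S (d1 (d2 g)) c1 c2 0 /\ lim_inside S (d2 (d2 g)) c1 c2 0.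

Definition open_sq (u v : R) : Prop := 0 < u < 1 /\ 0 < v < 1.
Definition closed_sq (u v : R) : Prop := 0 <= u <= 1 /\ 0 <= v <= 1.

Definition at_corners (P : R -> R -> Prop) : Prop :=
  P 0 0 /\ P 1 0 /\ P 1 1 /\ P 0 1.

Definition open2 (U : R -> R -> Prop) : Prop :=
  forall x y, U x y -> exists e, 0 < e /\
    forall x' y', Rabs (x' - x) < e -> Rabs (y' - y) < e -> U x' y'.

Definition cont2_at (g : R -> R -> R) (x y : R) : Prop :=
  forall eps, 0 < eps -> exists d, 0 < d /\
    forall x' y', Rabs (x' - x) < d -> Rabs (y' - y) < d ->
      Rabs (g x' y' - g x y) < eps.

Definition C2_on (U : R -> R -> Prop) (g : R -> R -> R) : Prop :=
  forall x y, U x y ->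
    ex_derive (fun s => g s y) x /\ ex_derive (fun s => g x s) y /\
    ex_derive (fun s => d1 g s y) x /\ ex_derive (fun s => d1 g x s) y /\
    ex_derive (fun s => d2 g s y) x /\ ex_derive (fun s => d2 g x s) y /\
    cont2_at g x y /\ cont2_at (d1 g) x y /\ cont2_at (d2 g) x y /\
    cont2_at (d1 (d1 g)) x y /\ cont2_at (d2 (d1 g)) x y /\
    cont2_at (d1 (d2 g)) x y /\ cont2_at (d2 (d2 g)) x y.

Definition regular_param (F1 F2 G1 G2 : R -> R -> R) : Prop :=
  (exists U, open2 U /\ (forall u v, closed_sq u v -> U u v) /\ C2_on U F1 /\ C2_on U F2)
  /\ (exists V, open2 V /\ (forall u v, closed_sq u v -> V (F1 u v) (F2 u v))
        /\ C2_on V G1 /\ C2_on V G2)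
  /\ (forall u v, closed_sq u v -> G1 (F1 u v) (F2 u v) = u /\ G2 (F1 u v) (F2 u v) = v).

Definition phys_inside (F1 F2 : R -> R -> R) (x y : R) : Prop :=
  exists u v, open_sq u v /\ x = F1 u v /\ y = F2 u v.

(* Main.v *)
Require Import Defs.
From Stdlib Require Import Reals Lra Lia Arith FunctionalExtensionality.
From Coquelicot Require Import Coquelicot.
Open Scope R_scope.

Lemma d_const (c x : R) : is_derive (fun _ : R => c) x 0.
Proof. apply (@is_derive_const R_AbsRing R_NormedModule). Qed.
Lemma d_id (x : R) : is_derive (fun t : R => t) x 1.
Proof. apply (@is_derive_id R_AbsRing). Qed.
Lemma d_plus (f g : R -> R) x a b : is_derive f x a -> is_derive g x b -> is_derive (fun t => f t + g t) x (a + b).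
Proof. intros. apply (@is_derive_plus R_AbsRing R_NormedModule); auto. Qed.
Lemma d_mult (f g : R -> R) x a b : is_derive f x a -> is_derive g x b -> is_derive (fun t => f t * g t) x (a * g x + f x * b).
Proof. intros. apply (@is_derive_mult R_AbsRing); auto. intros; apply Rmult_comm. Qed.
Lemma d_comp (f g : R -> R) x a b : is_derive f (g x) a -> is_derive g x b -> is_derive (fun t => f (g t)) x (b * a).
Proof. intros. apply (@is_derive_comp R_AbsRing R_NormedModule); auto. Qed.

Lemma loc_of (x r : R) (P : R -> Prop) : 0 < r -> (forall t, Rabs (t - x) < r -> P t) -> locally x P.
Proof. intros Hr H. exists (mkposreal r Hr). intros y Hy. apply H. exact Hy. Qed.

Inductive ispoly : (R -> R) -> Prop :=
| ip_const c : ispoly (fun _ => c)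
| ip_id : ispoly (fun x => x)
| ip_plus f g : ispoly f -> ispoly g -> ispoly (fun x => f x + g x)
| ip_mult f g : ispoly f -> ispoly g -> ispoly (fun x => f x * g x).

Lemma ip_pow f m : ispoly f -> ispoly (fun x => f x ^ m).
Proof. intros H. induction m; simpl. apply ip_const. apply (ip_mult f (fun x => f x ^ m)); auto. Qed.

Lemma ip_ext f g : ispoly f -> (forall x, f x = g x) -> ispoly g.
Proof. intros H E. replace g with f; auto. apply functional_extensionality; auto. Qed.

Lemma ip_der f : ispoly f -> exists f', ispoly f' /\ forall x, is_derive f x (f' x).
Proof.
  induction 1.
  - exists (fun _ => 0). split. apply ip_const. intros; apply d_const.
  - exists (fun _ => 1). split. apply ip_const. intros; apply d_id.
  - destruct IHispoly1 as [f' [P1 D1]]. destruct IHispoly2 as [g' [P2 D2]].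
    exists (fun x => f' x + g' x). split. apply ip_plus; auto.
    intros x. apply d_plus; auto.
  - destruct IHispoly1 as [f' [P1 D1]]. destruct IHispoly2 as [g' [P2 D2]].
    exists (fun x => f' x * g x + f x * g' x). split.
    apply ip_plus; apply ip_mult; auto.
    intros x. apply d_mult; auto.
Qed.

Lemma ip_is_derive f : ispoly f -> forall x, is_derive f x (Derive f x).
Proof. intros H x. destruct (ip_der f H) as [f' [_ D]].
  rewrite (is_derive_unique _ _ _ (D x)). auto. Qed.

Lemma ip_Derive f : ispoly f -> ispoly (Derive f).
Proof. intros H. destruct (ip_der f H) as [f' [P D]]. apply (ip_ext f'); auto.
  intros x. rewrite (is_derive_unique _ _ _ (D x)). auto. Qed.

Lemma ip_cont f : ispoly f -> forall x, continuity_pt f x.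
Proof. intros H x. apply (proj2 (continuity_pt_filterlim f x)).
  apply (@ex_derive_continuous R_AbsRing R_NormedModule). eexists. apply ip_is_derive; auto. Qed.

Lemma ip_cont_eps f x : ispoly f -> forall eps, 0 < eps -> exists d, 0 < d /\
  forall y, Rabs (y - x) < d -> Rabs (f y - f x) < eps.
Proof.
  intros H eps He. pose proof (ip_cont f H x) as C'.
  apply continuity_pt_locally with (eps := mkposreal eps He) in C'.
  destruct C' as [d Hd]. exists d. split. apply cond_pos. intros y Hy. apply Hd. exact Hy.
Qed.

Lemma ip_affine a b : ispoly (fun x => a * x + b).
Proof. apply (ip_plus (fun x => a * x) (fun _ => b)). apply (ip_mult (fun _ => a) (fun x => x)).
  apply ip_const. apply ip_id. apply ip_const. Qed.
Definition inbox (x0 y0 e x y : R) : Prop := Rabs (x - x0) < e /\ Rabs (y - y0) < e.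

Fixpoint W (x0 y0 e : R) (k m : nat) (g : R -> R -> R) : Prop :=
  (forall x y, inbox x0 y0 e x y -> cont2_at g x y) /\ ((1 <= m)%nat -> g x0 y0 = 0) /\
  match k with O => True | S k' =>
   (forall x y, inbox x0 y0 e x y -> ex_derive (fun s => g s y) x /\ ex_derive (fun s => g x s) y)
   /\ W x0 y0 e k' (m-1)%nat (Defs.d1 g) /\ W x0 y0 e k' (m-1)%nat (Defs.d2 g) end.

Lemma box_loc1 x0 y0 e x y : inbox x0 y0 e x y -> locally x (fun s => inbox x0 y0 e s y).
Proof. intros [H1 H2]. apply (loc_of x (e - Rabs (x - x0))). lra.
  intros t Ht. split; auto.
  replace (t - x0) with ((t - x) + (x - x0)) by ring.
  pose proof (Rabs_triang (t - x) (x - x0)). lra. Qed.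

Lemma box_loc2 x0 y0 e x y : inbox x0 y0 e x y -> locally y (fun s => inbox x0 y0 e x s).
Proof. intros [H1 H2]. apply (loc_of y (e - Rabs (y - y0))). lra.
  intros t Ht. split; auto.
  replace (t - y0) with ((t - y) + (y - y0)) by ring.
  pose proof (Rabs_triang (t - y) (y - y0)). lra. Qed.

Lemma cont2_ext x0 y0 e g g' x y : (forall x y, inbox x0 y0 e x y -> g x y = g' x y) ->
  inbox x0 y0 e x y -> cont2_at g x y -> cont2_at g' x y.
Proof.
  intros E B C eps He. destruct (C eps He) as [d [Hd Hc]].
  destruct B as [B1 B2].
  exists (Rmin d (Rmin (e - Rabs (x - x0)) (e - Rabs (y - y0)))). split.
  { apply Rmin_glb_lt; auto. apply Rmin_glb_lt; lra. }
  intros x' y' H1 H2.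
  pose proof (Rmin_l d (Rmin (e - Rabs (x - x0)) (e - Rabs (y - y0)))).
  pose proof (Rmin_r d (Rmin (e - Rabs (x - x0)) (e - Rabs (y - y0)))).
  pose proof (Rmin_l (e - Rabs (x - x0)) (e - Rabs (y - y0))).
  pose proof (Rmin_r (e - Rabs (x - x0)) (e - Rabs (y - y0))).
  rewrite <- E, <- E. apply Hc; lra.
  split; auto.
  split.
  replace (x' - x0) with ((x' - x) + (x - x0)) by ring.
  pose proof (Rabs_triang (x' - x) (x - x0)). lra.
  replace (y' - y0) with ((y' - y) + (y - y0)) by ring.
  pose proof (Rabs_triang (y' - y) (y - y0)). lra.
Qed.

Lemma d1_ext x0 y0 e g g' x y : (forall x y, inbox x0 y0 e x y -> g x y = g' x y) ->
  inbox x0 y0 e x y -> Defs.d1 g x y = Defs.d1 g' x y.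
Proof. intros E B. unfold Defs.d1. apply Derive_ext_loc.
  apply (filter_imp (fun s => inbox x0 y0 e s y)). intros; auto. apply box_loc1; auto. Qed.

Lemma d2_ext x0 y0 e g g' x y : (forall x y, inbox x0 y0 e x y -> g x y = g' x y) ->
  inbox x0 y0 e x y -> Defs.d2 g x y = Defs.d2 g' x y.
Proof. intros E B. unfold Defs.d2. apply Derive_ext_loc.
  apply (filter_imp (fun s => inbox x0 y0 e x s)). intros; auto. apply box_loc2; auto. Qed.

Lemma W_ext x0 y0 e k : forall m g g', (0 < e) -> (forall x y, inbox x0 y0 e x y -> g x y = g' x y) ->
  W x0 y0 e k m g -> W x0 y0 e k m g'.
Proof.
  assert (B0 : forall e, 0 < e -> inbox x0 y0 e x0 y0).
  { intros; split; rewrite Rminus_eq_0, Rabs_R0; auto. }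
  induction k; intros m g g' He E Hw.
  - destruct Hw as [Hc [Hv _]]. split; [|split; auto].
    intros; apply (cont2_ext x0 y0 e g); auto.
    intros; rewrite <- E; auto.
  - destruct Hw as [Hc [Hv [Hd [W1 W2]]]]. split; [|split; [|split; [|split]]].
    + intros; apply (cont2_ext x0 y0 e g); auto.
    + intros; rewrite <- E; auto.
    + intros x y B. destruct (Hd x y B). split.
      apply (ex_derive_ext_loc (fun s => g s y)); auto.
      apply (filter_imp (fun s => inbox x0 y0 e s y)). intros; auto. apply box_loc1; auto.
      apply (ex_derive_ext_loc (fun s => g x s)); auto.
      apply (filter_imp (fun s => inbox x0 y0 e x s)). intros; auto. apply box_loc2; auto.
    + apply (IHk _ (Defs.d1 g)); auto. intros; apply (d1_ext x0 y0 e); auto.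
    + apply (IHk _ (Defs.d2 g)); auto. intros; apply (d2_ext x0 y0 e); auto.
Qed.

Lemma W_mono x0 y0 e k : forall m m' g, (m' <= m)%nat -> W x0 y0 e k m g -> W x0 y0 e k m' g.
Proof.
  induction k; intros m m' g Hm Hw.
  - destruct Hw as [Hc [Hv _]]. split; auto. split; auto. intros; apply Hv; lia.
  - destruct Hw as [Hc [Hv [Hd [W1 W2]]]]. split; auto. split. intros; apply Hv; lia.
    split; auto. split; apply (IHk (m-1)%nat); auto; lia.
Qed.

Lemma W_down x0 y0 e k : forall m g, W x0 y0 e (S k) m g -> W x0 y0 e k m g.
Proof.
  induction k; intros m g Hw.
  - destruct Hw as [Hc [Hv _]]. split; auto.
  - destruct Hw as [Hc [Hv [Hd [W1 W2]]]]. split; [auto|]. split; [auto|].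
    split; [auto|]. split; apply IHk; auto.
Qed.

Lemma exd_plus (f g : R -> R) x : ex_derive f x -> ex_derive g x -> ex_derive (fun t => f t + g t) x.
Proof. intros. apply (@ex_derive_plus R_AbsRing R_NormedModule); auto. Qed.
Lemma exd_const (c x : R) : ex_derive (fun _ : R => c) x.
Proof. apply (@ex_derive_const R_AbsRing R_NormedModule). Qed.
Lemma exd_id (x : R) : ex_derive (fun t : R => t) x.
Proof. apply (@ex_derive_id R_AbsRing). Qed.
Lemma exd_comp (f g : R -> R) x : ex_derive f (g x) -> ex_derive g x -> ex_derive (fun t => f (g t)) x.
Proof. intros. apply (@ex_derive_comp R_AbsRing R_NormedModule); auto. Qed.
Lemma Der_id (x : R) : Derive (fun t => t) x = 1.
Proof. apply is_derive_unique. apply d_id. Qed.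

Lemma prod_close g0 h0 g h eta eps : Rabs (g - g0) < eta -> Rabs (h - h0) < eta -> eta <= 1 ->
  eta * (1 + Rabs g0 + Rabs h0) <= eps -> Rabs (g*h - g0*h0) < eps.
Proof.
  intros Ha Hb He Hs.
  replace (g*h - g0*h0) with ((g-g0)*(h-h0) + (g-g0)*h0 + g0*(h-h0)) by ring.
  pose proof (Rabs_triang ((g-g0)*(h-h0) + (g-g0)*h0) (g0*(h-h0))).
  pose proof (Rabs_triang ((g-g0)*(h-h0)) ((g-g0)*h0)).
  rewrite !Rabs_mult in *.
  pose proof (Rabs_pos (g-g0)). pose proof (Rabs_pos (h-h0)).
  pose proof (Rabs_pos g0). pose proof (Rabs_pos h0).
  nra.
Qed.

Lemma cont2_plus g h x y : cont2_at g x y -> cont2_at h x y -> cont2_at (fun a b => g a b + h a b) x y.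
Proof.
  intros Cg Ch eps He. destruct (Cg (eps/2)) as [d1' [H1 C1]]; [lra|].
  destruct (Ch (eps/2)) as [d2' [H2 C2]]; [lra|].
  exists (Rmin d1' d2'). split. apply Rmin_glb_lt; auto.
  intros x' y' X Y. pose proof (Rmin_l d1' d2'). pose proof (Rmin_r d1' d2').
  specialize (C1 x' y'). specialize (C2 x' y').
  replace (g x' y' + h x' y' - (g x y + h x y)) with ((g x' y' - g x y) + (h x' y' - h x y)) by ring.
  pose proof (Rabs_triang (g x' y' - g x y) (h x' y' - h x y)).
  assert (Rabs (g x' y' - g x y) < eps/2) by (apply C1; lra).
  assert (Rabs (h x' y' - h x y) < eps/2) by (apply C2; lra). lra.
Qed.

Lemma cont2_mult g h x y : cont2_at g x y -> cont2_at h x y -> cont2_at (fun a b => g a b * h a b) x y.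
Proof.
  intros Cg Ch eps He.
  set (K := 1 + Rabs (g x y) + Rabs (h x y)).
  assert (HK : 0 < K) by (unfold K; pose proof (Rabs_pos (g x y)); pose proof (Rabs_pos (h x y)); lra).
  set (eta := Rmin 1 (eps / K)).
  assert (Heta : 0 < eta) by (apply Rmin_glb_lt; [lra| apply Rdiv_lt_0_compat; auto]).
  destruct (Cg eta Heta) as [d1' [H1 C1]]. destruct (Ch eta Heta) as [d2' [H2 C2]].
  exists (Rmin d1' d2'). split. apply Rmin_glb_lt; auto.
  intros x' y' X Y. pose proof (Rmin_l d1' d2'). pose proof (Rmin_r d1' d2').
  apply (prod_close _ _ _ _ eta). apply C1; lra. apply C2; lra. apply Rmin_l.
  unfold eta. pose proof (Rmin_r 1 (eps / K)).
  fold K. apply Rle_trans with (eps / K * K). apply Rmult_le_compat_r; lra.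
  right; field; lra.
Qed.

Lemma cont2_comp a G x y : ispoly a -> cont2_at G x y -> cont2_at (fun u v => a (G u v)) x y.
Proof.
  intros Pa CG eps He. destruct (ip_cont_eps a (G x y) Pa eps He) as [d [Hd Ha]].
  destruct (CG d Hd) as [d' [Hd' C]]. exists d'. split; [auto|].
  intros. apply Ha. apply C; auto.
Qed.

Lemma cont2_const c x y : cont2_at (fun _ _ => c) x y.
Proof. intros eps He. exists 1. split. lra. intros. rewrite Rminus_eq_0, Rabs_R0; auto. Qed.
Lemma cont2_p1 x y : cont2_at (fun a _ => a) x y.
Proof. intros eps He. exists eps. split; auto. Qed.
Lemma cont2_p2 x y : cont2_at (fun _ b => b) x y.
Proof. intros eps He. exists eps. split; auto. Qed.

Lemma W_const x0 y0 e k : 0 < e -> forall m c, ((1 <= m)%nat -> c = 0) -> W x0 y0 e k m (fun _ _ => c).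
Proof.
  intros He. induction k; intros m c Hc.
  - split. intros; apply cont2_const. split; auto.
  - split. intros; apply cont2_const. split; auto. split.
    intros; split; apply exd_const.
    split; apply (W_ext x0 y0 e k (m-1)%nat (fun _ _ => 0)); auto;
      try (intros; unfold Defs.d1, Defs.d2; rewrite Derive_const; auto).
Qed.

Lemma W_plus x0 y0 e k : 0 < e -> forall m g h, W x0 y0 e k m g -> W x0 y0 e k m h ->
  W x0 y0 e k m (fun a b => g a b + h a b).
Proof.
  intros He. induction k; intros m g h Wg Wh.
  - destruct Wg as [Cg [Vg _]]. destruct Wh as [Ch [Vh _]].
    split. intros; apply cont2_plus; auto. split; auto. intros; rewrite Vg, Vh; auto; ring.
  - destruct Wg as [Cg [Vg [Dg [Wg1 Wg2]]]]. destruct Wh as [Ch [Vh [Dh [Wh1 Wh2]]]].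
    split. intros; apply cont2_plus; auto. split. intros; rewrite Vg, Vh; auto; ring.
    split. intros x y B. destruct (Dg x y B); destruct (Dh x y B); split; apply exd_plus; auto.
    split.
    + apply (W_ext x0 y0 e k (m-1)%nat (fun a b => Defs.d1 g a b + Defs.d1 h a b)); auto.
      intros x y B. destruct (Dg x y B); destruct (Dh x y B). unfold Defs.d1.
      rewrite Derive_plus; auto.
    + apply (W_ext x0 y0 e k (m-1)%nat (fun a b => Defs.d2 g a b + Defs.d2 h a b)); auto.
      intros x y B. destruct (Dg x y B); destruct (Dh x y B). unfold Defs.d2.
      rewrite Derive_plus; auto.
Qed.

Lemma W_mult x0 y0 e k : 0 < e -> forall m1 m2 g h, W x0 y0 e k m1 g -> W x0 y0 e k m2 h ->
  W x0 y0 e k (m1 + m2) (fun a b => g a b * h a b).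
Proof.
  intros He. induction k; intros m1 m2 g h Wg Wh.
  - destruct Wg as [Cg [Vg _]]. destruct Wh as [Ch [Vh _]].
    split. intros; apply cont2_mult; auto. split; auto. intros.
    destruct m1. rewrite Vh; [ring|lia]. rewrite Vg; [ring|lia].
  - pose proof (W_down _ _ _ _ _ _ Wg) as Wg0. pose proof (W_down _ _ _ _ _ _ Wh) as Wh0.
    destruct Wg as [Cg [Vg [Dg [Wg1 Wg2]]]]. destruct Wh as [Ch [Vh [Dh [Wh1 Wh2]]]].
    split. intros; apply cont2_mult; auto. split.
    intros. destruct m1. rewrite Vh; [ring|lia]. rewrite Vg; [ring|lia].
    split. intros x y B. destruct (Dg x y B); destruct (Dh x y B); split; apply ex_derive_mult; auto.
    split.
    + apply (W_ext x0 y0 e k (m1 + m2 - 1)%nat (fun a b => Defs.d1 g a b * h a b + g a b * Defs.d1 h a b)); auto.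
      intros x y B. destruct (Dg x y B); destruct (Dh x y B). unfold Defs.d1.
      rewrite Derive_mult; auto.
      apply W_plus; auto.
      apply (W_mono _ _ _ _ (m1 - 1 + m2)%nat). lia. apply IHk; auto.
      apply (W_mono _ _ _ _ (m1 + (m2 - 1))%nat). lia. apply IHk; auto.
    + apply (W_ext x0 y0 e k (m1 + m2 - 1)%nat (fun a b => Defs.d2 g a b * h a b + g a b * Defs.d2 h a b)); auto.
      intros x y B. destruct (Dg x y B); destruct (Dh x y B). unfold Defs.d2.
      rewrite Derive_mult; auto.
      apply W_plus; auto.
      apply (W_mono _ _ _ _ (m1 - 1 + m2)%nat). lia. apply IHk; auto.
      apply (W_mono _ _ _ _ (m1 + (m2 - 1))%nat). lia. apply IHk; auto.
Qed.

Fixpoint zo (m : nat) (a : R -> R) (c : R) : Prop :=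
  match m with O => True | S m' => a c = 0 /\ zo m' (Derive a) c end.

Lemma W_comp x0 y0 e k : 0 < e -> forall m a c G, ispoly a -> zo m a c -> W x0 y0 e k 0 G ->
  G x0 y0 = c -> W x0 y0 e k m (fun u v => a (G u v)).
Proof.
  intros He. induction k; intros m a c G Pa Za WG HG.
  - destruct WG as [CG _]. split. intros; apply cont2_comp; auto. split; auto.
    intros. destruct m. lia. rewrite HG. apply Za.
  - pose proof (W_down _ _ _ _ _ _ WG) as WG0.
    destruct WG as [CG [_ [DG [WG1 WG2]]]].
    assert (Za' : zo (m-1) (Derive a) c) by (destruct m; simpl in *; [auto| replace (m-0)%nat with m by lia; tauto]).
    assert (Ea : forall z, ex_derive a z) by (intros; eexists; apply ip_is_derive; auto).
    split. intros; apply cont2_comp; auto. split.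
    intros. destruct m. lia. rewrite HG. apply Za.
    split. intros x y B. destruct (DG x y B); split; apply exd_comp; auto.
    split.
    + apply (W_ext x0 y0 e k (m - 1)%nat (fun u v => Derive a (G u v) * Defs.d1 G u v)); auto.
      intros x y B. destruct (DG x y B). unfold Defs.d1. rewrite (Derive_comp a (fun s => G s y) x); auto. ring.
      replace (m-1)%nat with (m - 1 + 0)%nat by lia.
      apply W_mult; auto. apply IHk with c; auto. apply ip_Derive; auto.
    + apply (W_ext x0 y0 e k (m - 1)%nat (fun u v => Derive a (G u v) * Defs.d2 G u v)); auto.
      intros x y B. destruct (DG x y B). unfold Defs.d2. rewrite (Derive_comp a (fun s => G x s) y); auto. ring.
      replace (m-1)%nat with (m - 1 + 0)%nat by lia.
      apply W_mult; auto. apply IHk with c; auto. apply ip_Derive; auto.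
Qed.

Lemma W_p1 x0 y0 e k : 0 < e -> W x0 y0 e k 0 (fun a _ => a).
Proof.
  intros He. destruct k.
  - split. intros; apply cont2_p1. split; auto. intros; lia.
  - split. intros; apply cont2_p1. split. intros; lia. split.
    intros; split. apply exd_id. apply exd_const.
    split.
    + apply (W_ext x0 y0 e k 0%nat (fun _ _ => 1)); auto.
      intros; unfold Defs.d1; rewrite Der_id; auto. apply W_const; auto. intros; lia.
    + apply (W_ext x0 y0 e k 0%nat (fun _ _ => 0)); auto.
      intros; unfold Defs.d2; rewrite Derive_const; auto. apply W_const; auto.
Qed.

Lemma W_p2 x0 y0 e k : 0 < e -> W x0 y0 e k 0 (fun _ b => b).
Proof.
  intros He. destruct k.
  - split. intros; apply cont2_p2. split; auto. intros; lia.
  - split. intros; apply cont2_p2. split. intros; lia. split.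
    intros; split. apply exd_const. apply exd_id.
    split.
    + apply (W_ext x0 y0 e k 0%nat (fun _ _ => 0)); auto.
      intros; unfold Defs.d1; rewrite Derive_const; auto. apply W_const; auto.
    + apply (W_ext x0 y0 e k 0%nat (fun _ _ => 1)); auto.
      intros; unfold Defs.d2; rewrite Der_id; auto. apply W_const; auto. intros; lia.
Qed.

Lemma lim_of_cont S g x0 y0 : cont2_at g x0 y0 -> g x0 y0 = 0 -> lim_inside S g x0 y0 0.
Proof. intros C V eps He. destruct (C eps He) as [d [Hd H]]. exists d. split; auto.
  intros. rewrite <- V. apply H; auto. Qed.

Lemma W_vanish S x0 y0 e g : 0 < e -> W x0 y0 e 2 3 g -> vanish2_inside S g x0 y0.
Proof.
  intros He Wg.
  assert (B0 : inbox x0 y0 e x0 y0) by (split; rewrite Rminus_eq_0, Rabs_R0; auto).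
  destruct Wg as [Cg [Vg [Dg [W1 W2]]]]. simpl in W1, W2.
  destruct W1 as [C1 [V1 [D1 [W11 W12]]]]. destruct W2 as [C2 [V2 [D2 [W21 W22]]]].
  destruct W11 as [C11 [V11 _]]. destruct W12 as [C12 [V12 _]].
  destruct W21 as [C21 [V21 _]]. destruct W22 as [C22 [V22 _]].
  split.
  { exists e. split; auto. intros u v _ Hu Hv.
    destruct (Dg u v (conj Hu Hv)). destruct (D1 u v (conj Hu Hv)). destruct (D2 u v (conj Hu Hv)).
    repeat split; auto. }
  repeat split; apply lim_of_cont; auto.
Qed.

Lemma frac_lin a b : frac a b = a * frac 1 b.
Proof. unfold frac. destruct (Req_EM_T b 0). ring. field; auto. Qed.


Lemma cdb0_eq t fi la i x : cdb t fi la 0 i x =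
  if Rlt_dec (t i) (t (S i)) then
    (if andb (if Nat.eq_dec i fi then true else if Rle_dec (t i) x then true else false)
             (if Nat.eq_dec i la then true else if Rlt_dec x (t (S i)) then true else false)
     then 1 else 0) else 0.
Proof. reflexivity. Qed.

Lemma cdbS_eq t fi la q i x : cdb t fi la (S q) i x =
  frac (x - t i) (t (i + S q)%nat - t i) * cdb t fi la q i x
  + frac (t (i + S q + 1)%nat - x) (t (i + S q + 1)%nat - t (S i)) * cdb t fi la q (S i) x.
Proof. reflexivity. Qed.

Lemma zeroL t fi la : (forall k, (k <= fi)%nat -> t k = 0) ->
  forall q i x, (i + q < fi)%nat -> cdb t fi la q i x = 0.
Proof.
  intros HA q. induction q; intros i x Hi.
  - rewrite cdb0_eq. rewrite (HA i), (HA (S i)) by lia.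
    destruct (Rlt_dec 0 0); [lra|auto].
  - rewrite cdbS_eq. rewrite IHq, IHq by lia. ring.
Qed.

Lemma zeroL2 t fi la h : (forall k, (fi < k)%nat -> h <= t k) ->
  forall q i x, (fi < i)%nat -> x < h -> cdb t fi la q i x = 0.
Proof.
  intros HC q. induction q; intros i x Hi Hx.
  - rewrite cdb0_eq. destruct (Rlt_dec _ _); auto.
    destruct (Nat.eq_dec i fi); [lia|].
    destruct (Rle_dec (t i) x). specialize (HC i Hi). lra. simpl. auto.
  - rewrite cdbS_eq. rewrite IHq, IHq by first [lia|auto]. ring.
Qed.

Lemma formL t fi la h : 0 < h -> (forall k, (k <= fi)%nat -> t k = 0) -> t (S fi) = h ->
  (forall k, (fi < k)%nat -> h <= t k) -> la <> fi ->
  forall q i, exists g, ispoly g /\ forall x, x < h -> cdb t fi la q i x = x ^ (i + q - fi) * g x.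
Proof.
  intros Hh HA HB HC HD q. induction q; intros i.
  - destruct (lt_eq_lt_dec i fi) as [[Hi|Hi]|Hi].
    + exists (fun _ => 0). split. apply ip_const. intros. rewrite zeroL; auto. ring. lia.
    + subst i. exists (fun _ => 1). split. apply ip_const. intros x Hx.
      rewrite cdb0_eq, HA, HB by lia. destruct (Rlt_dec 0 h); [|lra].
      destruct (Nat.eq_dec fi fi); [|lia]. destruct (Nat.eq_dec fi la); [lia|].
      destruct (Rlt_dec x h); [|lra]. simpl. replace (fi + 0 - fi)%nat with 0%nat by lia. ring.
    + exists (fun _ => 0). split. apply ip_const. intros. rewrite (zeroL2 t fi la h); auto. ring.
  - destruct (le_lt_dec i fi) as [Hi|Hi].
    2:{ exists (fun _ => 0). split. apply ip_const. intros. rewrite (zeroL2 t fi la h); auto. ring. }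
    destruct (IHq i) as [g1 [P1 E1]]. destruct (IHq (S i)) as [g2 [P2 E2]].
    set (c1 := frac 1 (t (i + S q)%nat - t i)).
    set (c2 := frac 1 (t (i + S q + 1)%nat - t (S i))).
    set (T := t (i + S q + 1)%nat).
    destruct (le_lt_dec fi (i + q)) as [Hq|Hq].
    + exists (fun x => c1 * g1 x + c2 * (T - x) * g2 x). split.
      { apply ip_plus. apply (ip_mult (fun _ => c1)); [apply ip_const|auto].
        apply (ip_mult (fun x => c2 * (T - x))); auto.
        apply (ip_ext (fun x => (- c2) * x + c2 * T)). apply ip_affine. intros; ring. }
      intros x Hx. rewrite cdbS_eq, E1, E2 by auto. rewrite (frac_lin (x - t i)), (frac_lin (T - x)).
      fold c1 c2 T. rewrite (HA i Hi).
      replace (i + S q - fi)%nat with (S (i + q - fi)) by lia.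
      replace (S i + q - fi)%nat with (S (i + q - fi)) by lia.
      simpl. ring.
    + exists (fun x => c2 * (T - x) * g2 x). split.
      { apply (ip_mult (fun x => c2 * (T - x))); auto.
        apply (ip_ext (fun x => (- c2) * x + c2 * T)). apply ip_affine. intros; ring. }
      intros x Hx. rewrite cdbS_eq, E2 by auto. rewrite (zeroL t fi la HA q i x) by lia.
      rewrite (frac_lin (T - x)). fold c2 T.
      replace (S i + q - fi)%nat with (i + S q - fi)%nat by lia. ring.
Qed.

Lemma explE t fi la h : 0 < h -> (forall k, (k <= fi)%nat -> t k = 0) -> t (S fi) = h -> la <> fi ->
  forall q k x, (k + q = fi)%nat -> x < h -> cdb t fi la q k x = ((h - x) / h) ^ q.
Proof.
  intros Hh HA HB HD q. induction q; intros k x Hk Hx.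
  - replace k with fi by lia. rewrite cdb0_eq, HA, HB by lia. destruct (Rlt_dec 0 h); [|lra].
    destruct (Nat.eq_dec fi fi); [|lia]. destruct (Nat.eq_dec fi la); [lia|].
    destruct (Rlt_dec x h); [|lra]. simpl. auto.
  - rewrite cdbS_eq. rewrite (zeroL t fi la HA q k x) by lia. rewrite (IHq (S k)) by (auto; lia).
    replace (k + S q + 1)%nat with (S fi) by lia. rewrite HB, (HA (S k)) by lia.
    unfold frac. destruct (Req_EM_T (h - 0) 0). lra. simpl. field. lra.
Qed.

Lemma explD t fi la h : 0 < h -> (forall k, (k <= fi)%nat -> t k = 0) -> t (S fi) = h ->
  (forall k, (fi < k)%nat -> h <= t k) -> la <> fi ->
  forall q k, (1 <= q)%nat -> (k + q = S fi)%nat ->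
  exists g, ispoly g /\ g 0 = INR q / h /\ forall x, x < h -> cdb t fi la q k x = x * g x.
Proof.
  intros Hh HA HB HC HD q. induction q; intros k Hq Hk. lia.
  set (T := t (S (S fi))). assert (HT : h <= T) by (apply HC; lia).
  destruct q.
  - exists (fun _ => / h). split. apply ip_const. split. simpl. field. lra.
    intros x Hx. rewrite cdbS_eq. rewrite (zeroL2 t fi la h HC 0 (S k)) by (auto; lia).
    replace k with fi by lia. rewrite (explE t fi la h Hh HA HB HD 0 fi x) by (auto; lia).
    rewrite HA by lia. replace (fi + 1)%nat with (S fi) by lia. rewrite HB.
    unfold frac. destruct (Req_EM_T (h - 0) 0). lra. simpl. field. lra.
  - destruct (IHq (S k)) as [g2 [P2 [V2 E2]]]; try lia.
    exists (fun x => / h * ((h - x) / h) ^ (S q) + (T - x) / T * g2 x). split.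
    { apply ip_plus. apply (ip_mult (fun _ => / h)). apply ip_const. apply ip_pow.
      apply (ip_ext (fun x => (- / h) * x + h / h)). apply ip_affine. intros; unfold Rdiv; ring.
      apply (ip_mult (fun x => (T - x) / T)); auto.
      apply (ip_ext (fun x => (- / T) * x + T / T)). apply ip_affine. intros; unfold Rdiv; ring. }
    split.
    { rewrite V2. replace ((h - 0) / h) with 1 by (field; lra). rewrite pow1.
      rewrite !S_INR. field. lra. }
    intros x Hx. rewrite cdbS_eq. rewrite E2 by auto.
    rewrite (explE t fi la h Hh HA HB HD (S q) k x) by (auto; lia).
    rewrite (HA k) by lia. rewrite (HA (S k)) by lia.
    replace (k + S (S q))%nat with (S fi) by lia. rewrite HB.
    replace (S fi + 1)%nat with (S (S fi)) by lia. fold T.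
    unfold frac. destruct (Req_EM_T (h - 0) 0). lra. destruct (Req_EM_T (T - 0) 0). lra.
    field. lra.
Qed.

Lemma zeroR t fi la : (forall k, (k <= la)%nat -> t k <= t la) ->
  forall q i x, (i + q < la)%nat -> t la < x -> cdb t fi la q i x = 0.
Proof.
  intros RB q. induction q; intros i x Hi Hx.
  - rewrite cdb0_eq. destruct (Rlt_dec _ _); auto.
    destruct (Nat.eq_dec i la); [lia|].
    destruct (Rlt_dec x (t (S i))). specialize (RB (S i)). assert (S i <= la)%nat by lia. 
    specialize (RB H). lra.
    rewrite Bool.andb_false_r. auto.
  - rewrite cdbS_eq. rewrite IHq, IHq by first [lia|auto]. ring.
Qed.

Lemma zeroR2 t fi la : (forall k, (S la <= k)%nat -> t k = 1) ->
  forall q i x, (la < i)%nat -> cdb t fi la q i x = 0.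
Proof.
  intros RA q. induction q; intros i x Hi.
  - rewrite cdb0_eq. rewrite (RA i), (RA (S i)) by lia. destruct (Rlt_dec 1 1); [lra|auto].
  - rewrite cdbS_eq. rewrite IHq, IHq by lia. ring.
Qed.

Lemma formR t fi la : (forall k, (S la <= k)%nat -> t k = 1) ->
  (forall k, (k <= la)%nat -> t k <= t la) -> t la < 1 -> fi <> la ->
  forall q i, (i <= la)%nat -> exists g, ispoly g /\
    forall x, t la < x -> cdb t fi la q i x = (x - 1) ^ (la - i) * g x.
Proof.
  intros RA RB RC RD q. induction q; intros i Hi.
  - destruct (le_lt_eq_dec i la Hi) as [Hl|He].
    + exists (fun _ => 0). split. apply ip_const. intros. rewrite (zeroR t fi la RB); auto. ring. lia.
    + subst i. exists (fun _ => 1). split. apply ip_const. intros x Hx.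
      rewrite cdb0_eq, (RA (S la)) by lia. destruct (Rlt_dec (t la) 1); [|lra].
      destruct (Nat.eq_dec la fi); [lia|]. destruct (Rle_dec (t la) x); [|lra].
      destruct (Nat.eq_dec la la); [|lia]. simpl. replace (la - la)%nat with 0%nat by lia. ring.
  - destruct (IHq i Hi) as [g1 [P1 E1]].
    set (c1 := frac 1 (t (i + S q)%nat - t i)).
    set (c2 := frac 1 (t (i + S q + 1)%nat - t (S i))).
    set (T := t (i + S q + 1)%nat).
    destruct (le_lt_eq_dec i la Hi) as [Hl|He].
    + destruct (IHq (S i)) as [g2 [P2 E2]]; [lia|].
      destruct (le_lt_dec la (i + S q)) as [Hq|Hq].
      * exists (fun x => (x - t i) * c1 * g1 x + (- c2) * g2 x). split.
        { apply ip_plus. apply ip_mult; auto. apply (ip_ext (fun x => c1 * x + (- t i * c1))).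
          apply ip_affine. intros; ring.
          apply (ip_mult (fun _ => - c2)). apply ip_const. auto. }
        intros x Hx. rewrite cdbS_eq, E1, E2 by auto. rewrite (frac_lin (x - t i)), (frac_lin (t _ - x)).
        fold c1 c2 T. unfold T. rewrite (RA (i + S q + 1)%nat) by lia.
        replace (la - i)%nat with (S (la - S i)) by lia. simpl. ring.
      * exists (fun x => (x - t i) * c1 * g1 x). split.
        { apply ip_mult; auto. apply (ip_ext (fun x => c1 * x + (- t i * c1))).
          apply ip_affine. intros; ring. }
        intros x Hx. rewrite cdbS_eq, E1 by auto. rewrite (zeroR t fi la RB q (S i) x) by (auto; lia).
        rewrite (frac_lin (x - t i)). fold c1. ring.
    + subst i. exists (fun x => (x - t la) * c1 * g1 x). split.
      { apply ip_mult; auto. apply (ip_ext (fun x => c1 * x + (- t la * c1))).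
        apply ip_affine. intros; ring. }
      intros x Hx. rewrite cdbS_eq, E1 by auto. rewrite (zeroR2 t fi la RA q (S la) x) by lia.
      rewrite (frac_lin (x - t la)). fold c1. ring.
Qed.

Lemma INRn_pos n : (2 <= n)%nat -> 0 < INR n.
Proof. intros. apply lt_0_INR. lia. Qed.

Lemma KA p r n k : (k <= p)%nat -> knot p r n k = 0.
Proof. intros. unfold knot. replace (Nat.leb k p) with true; auto. symmetry. apply Nat.leb_le; auto. Qed.

Lemma knot_mid p r n k : (p < k)%nat -> (k < p + 1 + (n - 1) * (p - r))%nat ->
  knot p r n k = INR ((k - (p + 1)) / (p - r) + 1) / INR n.
Proof. intros H1 H2. unfold knot. replace (Nat.leb k p) with false by (symmetry; apply Nat.leb_gt; auto).
  replace (Nat.ltb k (p + 1 + (n - 1) * (p - r))) with true by (symmetry; apply Nat.ltb_lt; auto). auto. Qed.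

Lemma knot_top p r n k : (p + 1 + (n - 1) * (p - r) <= k)%nat -> knot p r n k = 1.
Proof. intros H. unfold knot. replace (Nat.leb k p) with false by (symmetry; apply Nat.leb_gt; nia).
  replace (Nat.ltb k (p + 1 + (n - 1) * (p - r))) with false by (symmetry; apply Nat.ltb_ge; auto). auto. Qed.

Lemma KB p r n : (r < p)%nat -> (2 <= n)%nat -> knot p r n (S p) = / INR n.
Proof. intros. rewrite knot_mid; try nia. replace (S p - (p + 1))%nat with 0%nat by lia.
  rewrite Nat.Div0.div_0_l. simpl. field. apply Rgt_not_eq. apply INRn_pos; auto. Qed.

Lemma KC p r n k : (r < p)%nat -> (2 <= n)%nat -> (p < k)%nat -> / INR n <= knot p r n k.
Proof. intros Hr Hn Hk. pose proof (INRn_pos n Hn).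
  destruct (le_lt_dec (p + 1 + (n - 1) * (p - r)) k).
  - rewrite knot_top; auto. rewrite <- Rinv_1. apply Rinv_le_contravar. lra.
    replace 1 with (INR 1) by auto. apply le_INR. lia.
  - rewrite knot_mid; auto. unfold Rdiv. rewrite <- (Rmult_1_l (/ INR n)) at 1.
    apply Rmult_le_compat_r. left; apply Rinv_0_lt_compat; auto.
    replace 1 with (INR 1) by auto. apply le_INR. lia.
Qed.

Lemma KRA p r n k : (S (last_span p r n) <= k)%nat -> knot p r n k = 1.
Proof. intros. apply knot_top. unfold last_span in *. lia. Qed.

Lemma KL p r n : (r < p)%nat -> (2 <= n)%nat -> knot p r n (last_span p r n) = 1 - / INR n.
Proof. intros Hr Hn. pose proof (INRn_pos n Hn). unfold last_span.
  rewrite knot_mid; try nia.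
  replace ((p + (n - 1) * (p - r) - (p + 1)) / (p - r) + 1)%nat with (n - 1)%nat.
  rewrite minus_INR by lia. simpl. field. lra.
  assert (Hd : ((p + (n - 1) * (p - r) - (p + 1)) = (n - 2) * (p - r) + (p - r - 1))%nat) by nia.
  rewrite Hd. rewrite <- (Nat.div_unique ((n - 2) * (p - r) + (p - r - 1)) (p - r) (n - 2) (p - r - 1)); [lia|lia|nia].
Qed.

Lemma KRB p r n k : (r < p)%nat -> (2 <= n)%nat -> (k <= last_span p r n)%nat ->
  knot p r n k <= knot p r n (last_span p r n).
Proof. intros Hr Hn Hk. pose proof (INRn_pos n Hn).
  destruct (le_lt_dec k p).
  - rewrite KA by auto. rewrite KL by auto. assert (1 <= INR n).
    replace 1 with (INR 1) by auto. apply le_INR. lia.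
    assert (/ INR n <= 1). rewrite <- Rinv_1. apply Rinv_le_contravar; lra. lra.
  - unfold last_span in *. rewrite !knot_mid; try nia.
    unfold Rdiv. apply Rmult_le_compat_r. left; apply Rinv_0_lt_compat; auto.
    apply le_INR. apply Nat.add_le_mono_r. apply Nat.div_le_mono. lia. lia.
Qed.

Lemma L_gt p r n : (r < p)%nat -> (2 <= n)%nat -> (p < last_span p r n)%nat.
Proof. intros. unfold last_span. nia. Qed.

Lemma SL q r n i : (r < q)%nat -> (2 <= n)%nat ->
  exists g, ispoly g /\ forall x, x < / INR n -> bspline q r n i x = x ^ i * g x.
Proof.
  intros Hr Hn. pose proof (INRn_pos n Hn).
  destruct (formL (knot q r n) q (last_span q r n) (/ INR n)) with (q := q) (i := i) as [g [P E]].
  apply Rinv_0_lt_compat; auto. intros; apply KA; auto. apply KB; auto.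
  intros; apply KC; auto. pose proof (L_gt q r n Hr Hn). lia.
  exists g. split; auto. intros x Hx. unfold bspline. rewrite E by auto.
  replace (i + q - q)%nat with i by lia. auto.
Qed.

Lemma SR q r n i : (r < q)%nat -> (2 <= n)%nat -> (i <= last_span q r n)%nat ->
  exists g, ispoly g /\ forall x, 1 - / INR n < x ->
    bspline q r n i x = (x - 1) ^ (last_span q r n - i) * g x.
Proof.
  intros Hr Hn Hi. pose proof (INRn_pos n Hn).
  destruct (formR (knot q r n) q (last_span q r n)) with (q := q) (i := i) as [g [P E]]; auto.
  intros; apply KRA; auto. intros; apply KRB; auto. rewrite KL by auto.
  assert (0 < / INR n) by (apply Rinv_0_lt_compat; auto). lra.
  pose proof (L_gt q r n Hr Hn). lia.
  exists g. split; auto. intros x Hx. unfold bspline. rewrite E; auto. rewrite KL; auto.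
Qed.

Lemma SR0 q r n i x : (last_span q r n < i)%nat -> bspline q r n i x = 0.
Proof. intros. unfold bspline. apply (zeroR2 (knot q r n) q (last_span q r n)); auto.
  intros; apply KRA; auto. Qed.

Definition near (n : nat) (c x : R) : Prop := Rabs (x - c) < / INR n.

Lemma near0 n x : near n 0 x -> x < / INR n.
Proof. unfold near. rewrite Rminus_0_r. intros H. pose proof (Rle_abs x). lra. Qed.
Lemma near1 n x : near n 1 x -> 1 - / INR n < x.
Proof. unfold near. intros H. pose proof (Rabs_def2 _ _ H). lra. Qed.

Lemma ip_xc c k g : ispoly g -> ispoly (fun x => (x - c) ^ k * g x).
Proof. intros. apply ip_mult; auto. apply ip_pow. apply (ip_ext (fun x => 1 * x + - c)).
  apply ip_affine. intros; ring. Qed.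

Lemma spl_near q r n i c k : (r < q)%nat -> (2 <= n)%nat -> (c = 0 \/ c = 1) ->
  (c = 0 -> (k <= i)%nat) -> (c = 1 -> k = 0%nat \/ (k + i <= last_span q r n)%nat) ->
  exists g, ispoly g /\ forall x, near n c x -> bspline q r n i x = (x - c) ^ k * g x.
Proof.
  intros Hr Hn [Hc|Hc] H0 H1.
  - subst c. destruct (SL q r n i Hr Hn) as [g [P E]].
    exists (fun x => (x - 0) ^ (i - k) * g x). split. apply ip_xc; auto.
    intros x Hx. rewrite E by (apply near0; auto). rewrite !Rminus_0_r.
    assert (Ei : i = (k + (i - k))%nat) by (specialize (H0 eq_refl); lia).
    rewrite Ei at 1. rewrite pow_add. ring.
  - subst c. destruct (le_lt_dec i (last_span q r n)) as [Hi|Hi].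
    + destruct (SR q r n i Hr Hn Hi) as [g [P E]].
      destruct (H1 eq_refl) as [Hk|Hk].
      * subst k. exists (fun x => (x - 1) ^ (last_span q r n - i) * g x). split. apply ip_xc; auto.
        intros x Hx. rewrite E by (apply near1; auto). simpl. ring.
      * exists (fun x => (x - 1) ^ (last_span q r n - i - k) * g x). split. apply ip_xc; auto.
        intros x Hx. rewrite E by (apply near1; auto).
        assert (Ei : (last_span q r n - i = k + (last_span q r n - i - k))%nat) by lia.
        rewrite Ei at 1. rewrite pow_add. ring.
    + exists (fun _ => 0). split. apply ip_const. intros. rewrite SR0; auto. ring.
Qed.

Lemma rsum_poly n c N (F : nat -> R -> R) :
  (forall i, exists g, ispoly g /\ forall x, near n c x -> F i x = g x) ->
  exists g, ispoly g /\ forall x, near n c x -> rsum N (fun i => F i x) = g x.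
Proof.
  intros H. induction N.
  - exists (fun _ => 0). split. apply ip_const. intros; auto.
  - destruct IHN as [g1 [P1 E1]]. destruct (H N) as [g2 [P2 E2]].
    exists (fun x => g1 x + g2 x). split. apply ip_plus; auto.
    intros. simpl. rewrite E1, E2; auto.
Qed.

Lemma inS_near q r n c F : (r < q)%nat -> (2 <= n)%nat -> (c = 0 \/ c = 1) -> inS q r n F ->
  exists g, ispoly g /\ forall x, near n c x -> F x = g x.
Proof.
  intros Hr Hn Hc [co Hco].
  destruct (rsum_poly n c (dimS q r n) (fun i x => co i * bspline q r n i x)) as [g [P E]].
  { intros i. destruct (spl_near q r n i c 0 Hr Hn Hc) as [g [P E]]. intros; lia. auto.
    exists (fun x => co i * g x). split. apply (ip_mult (fun _ => co i)); auto. apply ip_const.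
    intros. rewrite E; auto. simpl. ring. }
  exists g. split; auto. intros. rewrite Hco. auto.
Qed.

Lemma der_form c k g : ispoly g -> (1 <= k)%nat ->
  Derive (fun x => (x - c) ^ k * g x) = (fun x => (x - c) ^ (k - 1) * (INR k * g x + (x - c) * Derive g x)).
Proof.
  intros P Hk. apply functional_extensionality. intros x. apply is_derive_unique.
  assert (D1 : is_derive (fun x => x - c) x 1).
  { auto_derive. auto. ring. }
  pose proof (is_derive_pow _ k x 1 D1) as D2.
  pose proof (d_mult _ _ x _ _ D2 (ip_is_derive g P x)) as D3.
  replace ((x - c) ^ (k - 1) * (INR k * g x + (x - c) * Derive g x)) with
    (INR k * 1 * (x - c) ^ Init.Nat.pred k * g x + (x - c) ^ k * Derive g x); auto.
  replace (Init.Nat.pred k) with (k - 1)%nat by lia.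
  replace k with (S (k - 1)) at 3 by lia. simpl. ring.
Qed.

Lemma zo_form m : forall k c g, ispoly g -> (m <= k)%nat -> zo m (fun x => (x - c) ^ k * g x) c.
Proof.
  induction m; intros k c g P Hm. simpl; auto.
  simpl. split. rewrite Rminus_eq_0, pow_i by lia. ring.
  rewrite der_form by (auto; lia). apply IHm. apply ip_plus.
  apply (ip_mult (fun _ => INR k)). apply ip_const. auto.
  apply ip_mult. apply (ip_ext (fun x => 1 * x + - c)). apply ip_affine. intros; ring.
  apply ip_Derive; auto. lia.
Qed.

Lemma corner_gen (x0 y0 e : R) (G1 G2 f : R -> R -> R) c1 c2 eps A B P Q S :
  0 < e -> W x0 y0 e 2 0 G1 -> W x0 y0 e 2 0 G2 -> G1 x0 y0 = c1 -> G2 x0 y0 = c2 ->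
  (forall x y, inbox x0 y0 e x y -> inbox c1 c2 eps (G1 x y) (G2 x y)) ->
  (forall u v, inbox c1 c2 eps u v -> f u v = A u * P v + B u * Q v) ->
  ispoly A -> ispoly B -> ispoly P -> ispoly Q ->
  zo 1 B c1 -> zo 3 P c2 -> zo 2 Q c2 ->
  vanish2_inside S (fun x y => f (G1 x y) (G2 x y)) x0 y0.
Proof.
  intros He W1 W2 H1 H2 Hm Hf PA PB PP PQ ZB ZP ZQ.
  apply (W_vanish S x0 y0 e); auto.
  apply (W_ext x0 y0 e 2 3 (fun x y => A (G1 x y) * P (G2 x y) + B (G1 x y) * Q (G2 x y))); auto.
  intros. rewrite Hf; auto.
  apply W_plus; auto.
  - replace 3%nat with (0 + 3)%nat by lia. apply W_mult; auto.
    apply W_comp with c1; simpl; auto. apply W_comp with c2; auto.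
  - replace 3%nat with (1 + 2)%nat by lia. apply W_mult; auto.
    apply W_comp with c1; auto. apply W_comp with c2; auto.
Qed.

Lemma W_of_C2 x0 y0 e V G : (forall x y, inbox x0 y0 e x y -> V x y) -> C2_on V G -> W x0 y0 e 2 0 G.
Proof.
  intros HV HC. simpl.
  repeat split; intros; try lia; destruct (HC x y (HV x y ltac:(auto))) as
    [a1 [a2 [a3 [a4 [a5 [a6 [a7 [a8 [a9 [a10 [a11 [a12 a13]]]]]]]]]]]]; auto.
Qed.

Definition corner_form (n : nat) (f : R -> R -> R) : Prop :=
  forall c1 c2, (c1 = 0 \/ c1 = 1) -> (c2 = 0 \/ c2 = 1) ->
  exists A B P Q, ispoly A /\ ispoly B /\ ispoly P /\ ispoly Q /\
    zo 1 B c1 /\ zo 3 P c2 /\ zo 2 Q c2 /\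
    forall u v, near n c1 u -> near n c2 v -> f u v = A u * P v + B u * Q v.

Lemma corner_part1 n f c1 c2 : (2 <= n)%nat -> corner_form n f -> (c1 = 0 \/ c1 = 1) -> (c2 = 0 \/ c2 = 1) ->
  vanish2_inside open_sq f c1 c2.
Proof.
  intros Hn Hf H1 H2. pose proof (INRn_pos n Hn). assert (Hh : 0 < / INR n) by (apply Rinv_0_lt_compat; auto).
  destruct (Hf c1 c2 H1 H2) as [A [B [P [Q [PA [PB [PP [PQ [ZB [ZP [ZQ E]]]]]]]]]]].
  apply (corner_gen c1 c2 (/ INR n) (fun a _ => a) (fun _ b => b) f c1 c2 (/ INR n) A B P Q); auto.
  apply W_p1; auto. apply W_p2; auto.
  intros u v [Hu Hv]. apply E; auto.
Qed.

Lemma corner_part2 n f c1 c2 F1 F2 G1 G2 : (2 <= n)%nat -> corner_form n f -> (c1 = 0 \/ c1 = 1) -> (c2 = 0 \/ c2 = 1) ->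
  regular_param F1 F2 G1 G2 ->
  vanish2_inside (phys_inside F1 F2) (fun x y => f (G1 x y) (G2 x y)) (F1 c1 c2) (F2 c1 c2).
Proof.
  intros Hn Hf H1 H2 [_ [[V [HO [HV [CG1 CG2]]]] HI]].
  pose proof (INRn_pos n Hn). assert (Hh : 0 < / INR n) by (apply Rinv_0_lt_compat; auto).
  assert (Hc : closed_sq c1 c2) by (unfold closed_sq; destruct H1, H2; subst; lra).
  destruct (HI c1 c2 Hc) as [E1 E2].
  specialize (HV c1 c2 Hc).
  destruct (HO _ _ HV) as [e0 [He0 Ho]].
  destruct (CG1 _ _ HV) as [_ [_ [_ [_ [_ [_ [C1 _]]]]]]].
  destruct (CG2 _ _ HV) as [_ [_ [_ [_ [_ [_ [C2 _]]]]]]].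
  destruct (C1 (/ INR n) Hh) as [d1' [Hd1 D1]]. destruct (C2 (/ INR n) Hh) as [d2' [Hd2 D2]].
  assert (He : 0 < Rmin e0 (Rmin d1' d2')) by (apply Rmin_glb_lt; auto; apply Rmin_glb_lt; auto).
  pose proof (Rmin_l e0 (Rmin d1' d2')). pose proof (Rmin_r e0 (Rmin d1' d2')).
  pose proof (Rmin_l d1' d2'). pose proof (Rmin_r d1' d2').
  remember (Rmin e0 (Rmin d1' d2')) as e eqn:Hee.
  assert (HB : forall x y, inbox (F1 c1 c2) (F2 c1 c2) e x y -> V x y).
  { intros x y [Bx By]. apply Ho; lra. }
  destruct (Hf c1 c2 H1 H2) as [A [B [P [Q [PA [PB [PP [PQ [ZB [ZP [ZQ E]]]]]]]]]]].
  apply (corner_gen _ _ e G1 G2 f c1 c2 (/ INR n) A B P Q); auto.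
  apply (W_of_C2 _ _ _ V); auto. apply (W_of_C2 _ _ _ V); auto.
  intros x y [Bx By]. split.
  rewrite <- E1. apply D1; lra. rewrite <- E2. apply D2; lra.
  intros u v [Hu Hv]. apply E; auto.
Qed.

Lemma part2_of n f : (2 <= n)%nat -> corner_form n f ->
  at_corners (vanish2_inside open_sq f)
  /\ (forall F1 F2 G1 G2 : R -> R -> R, regular_param F1 F2 G1 G2 ->
        at_corners (fun c1 c2 => vanish2_inside (phys_inside F1 F2)
               (fun x y => f (G1 x y) (G2 x y)) (F1 c1 c2) (F2 c1 c2))).
Proof.
  intros Hn Hf. split.
  - unfold at_corners. split; [|split; [|split]]; apply (corner_part1 n); auto.
  - intros. unfold at_corners. split; [|split; [|split]]; apply (corner_part2 n); auto.
Qed.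

Lemma near_loc n c v : near n c v -> locally v (fun s => near n c s).
Proof. unfold near. intros H. apply (loc_of v (/ INR n - Rabs (v - c))). lra.
  intros t Ht. replace (t - c) with ((t - v) + (v - c)) by ring.
  pose proof (Rabs_triang (t - v) (v - c)). lra. Qed.

Lemma upart p r n c1 : (r < p)%nat -> (1 <= p)%nat -> (2 <= n)%nat -> (c1 = 0 \/ c1 = 1) ->
  exists A B, ispoly A /\ ispoly B /\ zo 1 B c1 /\
    forall u, near n c1 u -> Bsp p r n 1 u + Bsp p r n 2 u = A u /\ Bsp p r n 2 u = B u.
Proof.
  intros Hr Hp Hn Hc. pose proof (L_gt p r n Hr Hn).
  destruct (spl_near p r n 0 c1 0 Hr Hn Hc) as [g0 [P0 E0]]. intros; lia. auto.
  destruct (spl_near p r n 1 c1 0 Hr Hn Hc) as [g1 [P1 E1]]. intros; lia. auto.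
  destruct (spl_near p r n 1 c1 1 Hr Hn Hc) as [g2 [P2 E2]]. intros; lia. intros; right; lia.
  exists (fun x => g0 x + g1 x), (fun x => (x - c1) ^ 1 * g2 x). split; [|split; [|split]].
  - apply ip_plus; auto.
  - apply ip_xc; auto.
  - apply zo_form; auto.
  - intros u Hu. change (Bsp p r n 1 u) with (bspline p r n 0 u). change (Bsp p r n 2 u) with (bspline p r n 1 u).
    split. rewrite E0, E1 by auto. simpl. ring. rewrite E2 by auto. auto.
Qed.

Lemma vpart_bp p n pt rt alpha beta j c2 cst : (2 <= p)%nat -> (2 <= n)%nat -> (rt < pt)%nat ->
  inS pt rt n beta -> (4 <= j <= dimS p (p - 1) n - 4)%nat -> (c2 = 0 \/ c2 = 1) ->
  exists P Q, ispoly P /\ ispoly Q /\ zo 3 P c2 /\ zo 2 Q c2 /\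
    forall v, near n c2 v -> Bsp p (p - 1) n j v = P v /\
      (alpha v * 0 + beta v * Derive (Bsp p (p - 1) n j) v) * cst = Q v.
Proof.
  intros Hp Hn Hrt Hb Hj Hc.
  assert (Hr : (p - 1 < p)%nat) by lia.
  destruct (spl_near p (p - 1) n (j - 1) c2 3 Hr Hn Hc) as [g [Pg Eg]].
  intros; lia. intros; right. unfold last_span. unfold dimS in Hj. replace (p - (p - 1))%nat with 1%nat in * by lia. lia.
  destruct (inS_near pt rt n c2 beta Hrt Hn Hc Hb) as [gb [Pb Eb]].
  exists (fun x => (x - c2) ^ 3 * g x),
    (fun x => (x - c2) ^ 2 * (gb x * (INR 3 * g x + (x - c2) * Derive g x) * cst)).
  split; [|split; [|split; [|split]]].
  - apply ip_xc; auto.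
  - apply ip_xc. apply ip_mult; [|apply ip_const]. apply ip_mult; auto. apply ip_plus.
    apply (ip_mult (fun _ => INR 3)). apply ip_const. auto.
    apply ip_mult. apply (ip_ext (fun x => 1 * x + - c2)). apply ip_affine. intros; ring.
    apply ip_Derive; auto.
  - apply zo_form; auto.
  - apply zo_form; auto. apply ip_mult; [|apply ip_const]. apply ip_mult; auto. apply ip_plus.
    apply (ip_mult (fun _ => INR 3)). apply ip_const. auto.
    apply ip_mult. apply (ip_ext (fun x => 1 * x + - c2)). apply ip_affine. intros; ring.
    apply ip_Derive; auto.
  - intros v Hv. unfold Bsp in *. replace (Init.Nat.pred j) with (j - 1)%nat by lia. split. apply Eg; auto.
    rewrite (Derive_ext_loc _ (fun x => (x - c2) ^ 3 * g x)).
    rewrite der_form by (auto; lia). rewrite Eb by auto. simpl. ring.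
    apply (filter_imp (fun s => near n c2 s)). intros; apply Eg; auto. apply near_loc; auto.
Qed.

Lemma vpart_bm p n pt rt alpha beta j c2 cst : (2 <= p)%nat -> (2 <= n)%nat -> (rt < pt)%nat ->
  inS pt rt n alpha -> (3 <= j <= dimS (p - 1) (p - 2) n - 3)%nat -> (c2 = 0 \/ c2 = 1) ->
  exists P Q, ispoly P /\ ispoly Q /\ zo 3 P c2 /\ zo 2 Q c2 /\
    forall v, near n c2 v -> 0 = P v /\
      (alpha v * Bsp (p - 1) (p - 2) n j v + beta v * Derive (fun _ => 0) v) * cst = Q v.
Proof.
  intros Hp Hn Hrt Ha Hj Hc.
  assert (Hr : (p - 2 < p - 1)%nat) by lia.
  destruct (spl_near (p - 1) (p - 2) n (j - 1) c2 2 Hr Hn Hc) as [g [Pg Eg]].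
  intros; lia. intros; right. unfold last_span. unfold dimS in Hj.
  replace (p - 1 - (p - 2))%nat with 1%nat in * by lia. lia.
  destruct (inS_near pt rt n c2 alpha Hrt Hn Hc Ha) as [ga [Pa Ea]].
  exists (fun x => (x - c2) ^ 3 * 0), (fun x => (x - c2) ^ 2 * (ga x * g x * cst)).
  split; [|split; [|split; [|split]]].
  - apply (ip_xc c2 3 (fun _ => 0)). apply ip_const.
  - apply ip_xc. apply ip_mult; [|apply ip_const]. apply ip_mult; auto.
  - apply (zo_form 3 3 c2 (fun _ => 0)); auto. apply ip_const.
  - apply zo_form; auto. apply ip_mult; [|apply ip_const]. apply ip_mult; auto.
  - intros v Hv. unfold Bsp in *. replace (Init.Nat.pred j) with (j - 1)%nat by lia. split. ring.
    rewrite Derive_const. rewrite Eg, Ea by auto. ring.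
Qed.

Lemma part1 p r n alpha beta bp bm v : (r < p)%nat -> (1 <= p)%nat -> (2 <= n)%nat -> alpha v <> 0 ->
  fpatch p r n alpha beta bp bm 0 v = bp v /\
  Dnormal alpha beta (fpatch p r n alpha beta bp bm) v = - bm v.
Proof.
  intros Hr Hp Hn Ha. pose proof (INRn_pos n Hn) as HnP.
  set (h := / INR n). assert (Hh : 0 < h) by (apply Rinv_0_lt_compat; auto).
  assert (HpP : 0 < INR p) by (apply lt_0_INR; lia).
  assert (HA : forall k, (k <= p)%nat -> knot p r n k = 0) by (intros; apply KA; auto).
  assert (HB : knot p r n (S p) = h) by (apply KB; auto).
  assert (HC : forall k, (p < k)%nat -> h <= knot p r n k) by (intros; apply KC; auto).
  assert (HD : last_span p r n <> p) by (pose proof (L_gt p r n Hr Hn); lia).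
  assert (E1 : forall x, x < h -> Bsp p r n 1 x = ((h - x) / h) ^ p).
  { intros x Hx. apply (explE _ _ _ h Hh HA HB HD); auto. }
  destruct (explD _ _ _ h Hh HA HB HC HD p 1) as [g [Pg [Vg E2]]]; try lia.
  assert (E2' : forall x, x < h -> Bsp p r n 2 x = x * g x) by (intros; apply E2; auto).
  assert (L0 : locally 0 (fun s => s < h)).
  { apply (loc_of 0 h). auto. intros t Ht. rewrite Rminus_0_r in Ht. pose proof (Rle_abs t). lra. }
  assert (D1 : is_derive (Bsp p r n 1) 0 (- INR p / h)).
  { apply (is_derive_ext_loc (fun x => ((h - x) / h) ^ p)).
    apply (filter_imp (fun s => s < h)); auto. intros; symmetry; auto.
    replace (- INR p / h) with (INR p * (- / h) * ((h - 0) / h) ^ Init.Nat.pred p).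
    apply (is_derive_pow (fun x => (h - x) / h) p 0 (- / h)). auto_derive. auto. field. lra.
    replace ((h - 0) / h) with 1 by (field; lra). rewrite pow1. field. lra. }
  assert (D2 : is_derive (Bsp p r n 2) 0 (g 0)).
  { apply (is_derive_ext_loc (fun x => x * g x)).
    apply (filter_imp (fun s => s < h)); auto. intros; symmetry; auto.
    replace (g 0) with (1 * g 0 + 0 * Derive g 0) by ring.
    apply d_mult. apply d_id. apply ip_is_derive; auto. }
  assert (V1 : Bsp p r n 1 0 = 1) by (rewrite E1 by lra; replace ((h - 0) / h) with 1 by (field; lra); apply pow1).
  assert (V2 : Bsp p r n 2 0 = 0) by (rewrite E2' by lra; ring).
  assert (F0 : forall s, fpatch p r n alpha beta bp bm 0 s = bp s).
  { intros s. unfold fpatch. rewrite V1, V2. ring. }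
  split; auto.
  unfold Dnormal, Defs.d1, Defs.d2.
  rewrite (Derive_ext (fun s => fpatch p r n alpha beta bp bm 0 s) bp) by auto.
  set (K := alpha v * bm v + beta v * Derive bp v).
  assert (DD : is_derive (fun s => fpatch p r n alpha beta bp bm s v) 0
     (bp v * (- INR p / h + g 0) + K * (hmesh n / INR p) * g 0)).
  { unfold fpatch. fold K. apply d_plus. apply is_derive_scal. apply d_plus; auto.
    apply is_derive_scal. auto. }
  assert (DE : Derive (fun s : R => fpatch p r n alpha beta bp bm s v) 0 =
     bp v * (- INR p / h + g 0) + K * (hmesh n / INR p) * g 0) by (apply is_derive_unique; exact DD).
  rewrite DE. rewrite Vg. unfold K, hmesh. fold h.
  field. repeat split; lra.
Qed.

Lemma corner_bp p r n pt rt alpha beta j : (r < p)%nat -> (2 <= p)%nat -> (2 <= n)%nat -> (rt < pt)%nat ->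
  inS pt rt n beta -> (4 <= j <= dimS p (p - 1) n - 4)%nat ->
  corner_form n (fpatch p r n alpha beta (Bsp p (p - 1) n j) (fun _ => 0)).
Proof.
  intros Hr Hp Hn Hrt Hb Hj c1 c2 H1 H2.
  destruct (upart p r n c1 Hr ltac:(lia) Hn H1) as [A [B [PA [PB [ZB EU]]]]].
  destruct (vpart_bp p n pt rt alpha beta j c2 (hmesh n / INR p) Hp Hn Hrt Hb Hj H2) as [P [Q [PP [PQ [ZP [ZQ EV]]]]]].
  exists A, B, P, Q. repeat (split; [auto|]).
  intros u v Hu Hv. unfold fpatch. destruct (EU u Hu) as [U1 U2]. destruct (EV v Hv) as [V1 V2].
  rewrite <- V2, <- U1, <- U2, <- V1. ring.
Qed.

Lemma corner_bm p r n pt rt alpha beta j : (r < p)%nat -> (2 <= p)%nat -> (2 <= n)%nat -> (rt < pt)%nat ->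
  inS pt rt n alpha -> (3 <= j <= dimS (p - 1) (p - 2) n - 3)%nat ->
  corner_form n (fpatch p r n alpha beta (fun _ => 0) (Bsp (p - 1) (p - 2) n j)).
Proof.
  intros Hr Hp Hn Hrt Ha Hj c1 c2 H1 H2.
  destruct (upart p r n c1 Hr ltac:(lia) Hn H1) as [A [B [PA [PB [ZB EU]]]]].
  destruct (vpart_bm p n pt rt alpha beta j c2 (hmesh n / INR p) Hp Hn Hrt Ha Hj H2) as [P [Q [PP [PQ [ZP [ZQ EV]]]]]].
  exists A, B, P, Q. repeat (split; [auto|]).
  intros u v Hu Hv. unfold fpatch. destruct (EU u Hu) as [U1 U2]. destruct (EV v Hv) as [V1 V2].
  rewrite <- V2, <- U1, <- U2, <- V1. ring.
Qed.

Theorem mainTheorem2 (p r n pt rt : nat) (alpha beta : R -> R)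
  (Hp : (2 <= p)%nat) (Hr1 : (1 <= r)%nat) (Hr2 : (r <= p - 1)%nat) (Hn : (2 <= n)%nat)
  (Hpt : (1 <= pt)%nat) (Hrt : (rt < pt)%nat)
  (Halpha : inS pt rt n alpha) (Hbeta : inS pt rt n beta)
  (Halpha0 : forall v, 0 <= v <= 1 -> alpha v <> 0) :
  (* (i) trace and approximate normal derivative *)
  (forall bp bm : R -> R, inS p (p - 1) n bp -> inS (p - 1) (p - 2) n bm ->
     forall v, 0 <= v <= 1 ->
       fpatch p r n alpha beta bp bm 0 v = bp v /\
       Dnormal alpha beta (fpatch p r n alpha beta bp bm) v = - bm v)
  /\
  (* (ii) vanishing of value, gradient, Hessian at the corners *)
  (forall f : R -> R -> R,
     ((exists j, (4 <= j <= dimS p (p - 1) n - 4)%nat /\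
                 f = fpatch p r n alpha beta (Bsp p (p - 1) n j) (fun _ => 0))
      \/ (exists j, (3 <= j <= dimS (p - 1) (p - 2) n - 3)%nat /\
                 f = fpatch p r n alpha beta (fun _ => 0) (Bsp (p - 1) (p - 2) n j))) ->
     at_corners (vanish2_inside open_sq f)
     /\ (forall F1 F2 G1 G2 : R -> R -> R, regular_param F1 F2 G1 G2 ->
           at_corners (fun c1 c2 =>
             vanish2_inside (phys_inside F1 F2)
               (fun x y => f (G1 x y) (G2 x y)) (F1 c1 c2) (F2 c1 c2)))).
Proof.
  assert (Hr : (r < p)%nat) by lia.
  split.
  - intros bp bm _ _ v Hv. apply part1; auto. lia.
  - intros f [[j [Hj Ef]]|[j [Hj Ef]]]; subst f; apply (part2_of n); auto.
    + apply (corner_bp p r n pt rt); auto.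
    + apply (corner_bm p r n pt rt); auto.
Qed.
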